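(* Let $r=r(n)\ge3$ and $m=m(n)\ge1$ be integers with $m=o(r^{-3}n^{3/2})$, and let $e$ be a fixed $r$-subset of $[n]$. For $H\in\mathcal{L}_r(n,m-1)$ let $N_r(H)$ be the set of $r$-subsets of $[n]$, distinct from $e$, no two vertices of which lie in a common edge of $H$. Then, as $n\to\infty$, uniformly over such $H$, \[ |N_r(H)|=\Bigl[N-\binom r2m\binom{n-2}{r-2}\Bigr]\Bigl(1+O\Bigl(\frac{r^4}{n^2}+\frac{r^6m^2}{n^3}\Bigr)\Bigr). \]
   Context: $N=\binom nr$. An $r$-graph on $[n]$ is a set of $r$-subsets of $[n]$ (edges); it is linear if any two distinct edges share at most one vertex. $\mathcal{L}_r(n,m)$ is the set of linear $r$-graphs on $[n]$ with exactly $m$ edges. *)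

(* Defs.v *)
From HB Require Import structures.
From mathcomp Require Import all_boot all_order all_algebra.
Set Implicit Arguments. Unset Strict Implicit. Unset Printing Implicit Defensive.
Import Order.TTheory GRing.Theory Num.Theory.

Definition is_rgraph (n r : nat) (H : {set {set 'I_n}}) : bool :=
  [forall h in H, #|h| == r].

Definition linear_graph (n : nat) (H : {set {set 'I_n}}) : bool :=
  [forall h1 in H, forall h2 in H, (h1 != h2) ==> (#|h1 :&: h2| <= 1)].

Definition in_L (n r m : nat) (H : {set {set 'I_n}}) : bool :=
  [&& is_rgraph r H, linear_graph H & #|H| == m].

Definition Nr (n r : nat) (e : {set 'I_n}) (H : {set {set 'I_n}}) : {set {set 'I_n}} :=
  [set f : {set 'I_n} | [&& #|f| == r, f != e &
     [forall x in f, forall y in f,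
        (x != y) ==> ~~ [exists h in H, (x \in h) && (y \in h)]]]].

(* Main.v *)
Require Import Defs.
From HB Require Import structures.
From mathcomp Require Import all_boot all_order all_algebra.
From mathcomp Require Import zify ring lra.
Import Order.TTheory GRing.Theory Num.Theory.
Set Implicit Arguments. Unset Strict Implicit.

Section Comb.
Variable T : finType.

Lemma setDK_sub (U f : {set T}) : U \subset f -> (f :\: U) :|: U = f.
Proof.
move=> h; apply/setP => x; rewrite !inE.
case hx: (x \in U); rewrite /= ?orbT ?orbF //.
by rewrite (subsetP h).
Qed.

Lemma count_sup_exact (U : {set T}) r : #|U| <= r ->
  #|[set f : {set T} | (#|f| == r) && (U \subset f)]| = 'C(#|T| - #|U|, r - #|U|).
Proof.
move=> hU.
have -> : #|T| - #|U| = #|~: U| by rewrite [in RHS]cardsCs setCK.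
rewrite -cards_draws.
rewrite -(@card_in_imset _ _ (fun f => f :\: U)); last first.
  move=> f g; rewrite !inE => /andP[_ hf] /andP[_ hg] e.
  by rewrite -(setDK_sub hf) -(setDK_sub hg) e.
apply: eq_card => g; rewrite inE; apply/imsetP/andP.
  case=> f; rewrite inE => /andP[/eqP hf hUf] ->; split.
    by apply/subsetP => x; rewrite !inE => /andP[].
  rewrite -hf -(cardsID U f) (setIidPr hUf).
  by rewrite addKn.
case=> hg /eqP hc; exists (g :|: U).
  rewrite inE subsetUr andbT cardsU.
  have -> : g :&: U = set0.
    apply/setP=> x; rewrite !inE; apply/negP => /andP[hx hx'].
    by move/subsetP: hg => /(_ x hx); rewrite inE hx'.
  by rewrite cards0 subn0 hc subnK.
rewrite setDUl setDv setU0; apply/setP => x; rewrite !inE.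
case hx: (x \in g); rewrite ?andbF ?andbT //.
by move/subsetP: hg => /(_ x hx); rewrite inE.
Qed.

Lemma count_sup_le (U : {set T}) r k : k <= #|U| ->
  #|[set f : {set T} | (#|f| == r) && (U \subset f)]| <= (k <= r) * 'C(#|T| - k, r - k).
Proof.
move=> hk; case: (leqP k r) => hkr; rewrite ?mul1n ?mul0n.
  have : 0 < #|[set A : {set T} | A \subset U & #|A| == k]| by rewrite cards_draws bin_gt0.
  case/card_gt0P => V; rewrite inE => /andP[hVU /eqP hV].
  rewrite -hV -count_sup_exact ?hV //.
  apply: subset_leq_card; apply/subsetP => f; rewrite !inE => /andP[-> /=].
  by move=> hf; apply: subset_trans hf.
rewrite leqn0 cards_eq0; apply/eqP/setP => f; rewrite !inE.
apply/negbTE/negP => /andP[/eqP hf hs].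
have := subset_leq_card hs; rewrite hf => h.
by have := leq_trans hk h; rewrite leqNgt hkr.
Qed.
End Comb.

Section G.
Variable n : nat.
Notation T := ('I_n).

Definition Q (h : {set T}) := [set p : {set T} | p \subset h & #|p| == 2].
Definition kf (H : {set {set T}}) (f : {set T}) : nat :=
  \sum_(h in H) \sum_(p in Q h) (p \subset f : nat).

Lemma good_kf (H : {set {set T}}) (f : {set T}) :
  [forall x in f, forall y in f,
        (x != y) ==> ~~ [exists h in H, (x \in h) && (y \in h)]] = (kf H f == 0).
Proof.
rewrite /kf sum_nat_eq0; apply/idP/idP.
  move=> hg; apply/forallP => h; apply/implyP => hH.
  rewrite sum_nat_eq0; apply/forallP => p; apply/implyP; rewrite inE => /andP[hph /cards2P[x [y [hxy ep]]]].
  rewrite eqb0; apply/negP => hpf.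
  have hx : x \in p by rewrite ep !inE eqxx.
  have hy : y \in p by rewrite ep !inE eqxx orbT.
  move/forallP: hg => /(_ x); rewrite (subsetP hpf _ hx) /= => /forallP /(_ y).
  rewrite (subsetP hpf _ hy) hxy /=; apply/negP; rewrite negbK.
  by apply/existsP; exists h; rewrite hH (subsetP hph _ hx) (subsetP hph _ hy).
move=> hk; apply/forallP => x; apply/implyP => hx; apply/forallP => y; apply/implyP => hy.
apply/implyP => hxy; apply/negP => /existsP [h /andP[hH /andP[xh yh]]].
move/forallP: hk => /(_ h); rewrite hH /= sum_nat_eq0 => /forallP /(_ [set x; y]).
have -> : [set x; y] \in Q h.
  rewrite inE cards2 hxy andbT; apply/subsetP => z; rewrite !inE.
  by case/orP => /eqP ->.
rewrite eqb0 /=; apply/negP; rewrite negbK; apply/subsetP => z; rewrite !inE.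
by case/orP => /eqP ->.
Qed.

Lemma sum_bool_card (X : finType) (P b : pred X) :
  \sum_(f | P f) (b f : nat) = #|[set f | P f && b f]|.
Proof.
rewrite -sum1_card [RHS]big_mkcond [LHS]big_mkcond /=.
by apply: eq_bigr => f _; rewrite inE; case: (P f); case: (b f).
Qed.

Lemma sum_k (H : {set {set T}}) r M : is_rgraph r H -> #|H| = M -> 2 <= r ->
  \sum_(f : {set T} | #|f| == r) kf H f = M * 'C(r, 2) * 'C(n - 2, r - 2).
Proof.
move=> hr hM h2; rewrite /kf exchange_big /=.
rewrite (eq_bigr (fun _ => 'C(r, 2) * 'C(n - 2, r - 2))) ?sum_nat_const ?hM ?mulnA //.
move=> h hH; rewrite exchange_big /=.
rewrite (eq_bigr (fun _ => 'C(n - 2, r - 2))) ?sum_nat_const.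
  by rewrite cards_draws; move/forallP: hr => /(_ h); rewrite hH => /eqP ->.
move=> p; rewrite inE => /andP[_ /eqP hp].
rewrite sum_bool_card count_sup_exact hp ?card_ord //.
Qed.

Definition G r (U : {set T}) := #|[set f : {set T} | (#|f| == r) && (U \subset f)]|.

Lemma term_bound (H : {set {set T}}) r h h' p p' :
  linear_graph H -> 3 <= r -> h \in H -> h' \in H -> p \in Q h -> p' \in Q h' ->
  G r (p :|: p') <= ((h' == h) && (p' == p)) * 'C(n - 2, r - 2)
     + (p :&: p' != set0) * 'C(n - 3, r - 3) + (4 <= r) * 'C(n - 4, r - 4).
Proof.
move=> hlin hr hH hH'; rewrite !inE => /andP[ph /eqP cp] /andP[ph' /eqP cp'].
rewrite /G.
have Hle : forall k, k <= #|p :|: p'| -> 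
   #|[set f : {set T} | (#|f| == r) && ((p :|: p') \subset f)]| <= (k <= r) * 'C(n - k, r - k).
  by move=> k hk; have := count_sup_le r hk; rewrite card_ord.
case: (eqVneq p' p) => [epp | npp].
  rewrite epp setUid andbT; case: (eqVneq h' h) => [ehh | nhh].
    apply: leq_trans (leq_addr _ _); apply: leq_trans (leq_addr _ _).
    by rewrite mul1n; have := Hle 2; rewrite epp setUid cp leqnn (leq_trans _ hr) // mul1n; apply.
  exfalso; move/forallP: hlin => /(_ h); rewrite hH /= => /forallP /(_ h'); rewrite hH' /=.
  rewrite eq_sym nhh /= => hc.
  have : p \subset h :&: h' by rewrite subsetI ph -epp ph'.
  move/subset_leq_card; rewrite cp => h2; have := leq_trans h2 hc; done.
have hI : #|p :&: p'| <= 1.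
  rewrite leqNgt; apply/negP => h2.
  have e1 : p :&: p' = p.
    apply/eqP; rewrite eqEcard subsetIl cp; exact: h2.
  have e2 : p :&: p' = p'.
    apply/eqP; rewrite eqEcard subsetIr cp'; exact: h2.
  by move: npp; rewrite -{1}e2 e1 eqxx.
have hU : #|p :|: p'| = 4 - #|p :&: p'| by rewrite cardsU cp cp'.
rewrite andbF mul0n add0n.
case: (eqVneq (p :&: p') set0) => [e0 | ne0].
  apply: leq_trans (leq_addl _ _).
  by apply: Hle; rewrite hU e0 cards0.
apply: leq_trans (leq_addr _ _); rewrite mul1n.
have := Hle 3; rewrite hr mul1n; apply.
by rewrite hU; move: hI; case: #|_| => [|[]].
Qed.

Lemma meet_count (p h' : {set T}) r : #|p| = 2 -> #|h'| = r ->
  #|[set p' | (p' \in Q h') && (p :&: p' != set0)]| <= 2 * r.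
Proof.
move=> cp ch.
apply: leq_trans (_ : #|[set [set uv.1; uv.2] | uv in setX p h']| <= _).
  apply: subset_leq_card; apply/subsetP => p'; rewrite !inE => /andP[/andP[ph' /cards2P[a [b [nab ep]]]] ne].
  case/set0Pn: ne => x; rewrite inE => /andP[xp xp'].
  move: xp'; rewrite ep !inE => /orP[] /eqP ex.
    apply/imsetP; exists (a, b) => //; rewrite inE /= -ex xp /=.
    by apply: (subsetP ph'); rewrite ep !inE eqxx orbT.
  apply/imsetP; exists (b, a) => /=; last by rewrite setUC.
  rewrite inE /= -ex xp /=.
  by apply: (subsetP ph'); rewrite ep !inE eqxx.
by apply: leq_trans (leq_imset_card _ _) _; rewrite cardsX cp ch.
Qed.

Lemma kf_sq (H : {set {set T}}) f : kf H f * kf H f =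
  \sum_(h in H) \sum_(p in Q h) \sum_(h' in H) \sum_(p' in Q h') ((p :|: p') \subset f : nat).
Proof.
rewrite {1}/kf big_distrl; apply: eq_bigr => h _; rewrite big_distrl.
apply: eq_bigr => p _; rewrite /kf big_distrr; apply: eq_bigr => h' _; rewrite big_distrr.
apply: eq_bigr => p' _; rewrite subUset.
by case: (p \subset f); case: (p' \subset f).
Qed.

Lemma sum_k2 (H : {set {set T}}) r M : is_rgraph r H -> linear_graph H -> #|H| = M -> 3 <= r ->
  \sum_(f : {set T} | #|f| == r) kf H f * kf H f <=
  M * 'C(r, 2) * ('C(n - 2, r - 2) + M * (2 * r) * 'C(n - 3, r - 3)
                  + M * 'C(r, 2) * ((4 <= r) * 'C(n - 4, r - 4))).
Proof.
move=> hr hlin hM h3.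
have cardh : forall h, h \in H -> #|h| = r.
  by move=> h hH; move/forallP: hr => /(_ h); rewrite hH => /eqP.
rewrite (eq_bigr _ (fun f _ => kf_sq H f)).
rewrite exchange_big /=.
set c := (X in _ <= _ * X).
have -> : M * 'C(r, 2) * c = \sum_(h in H) \sum_(p in Q h) c.
  rewrite (eq_bigr (fun _ => 'C(r, 2) * c)) ?sum_nat_const ?hM ?mulnA //.
  by move=> h hH; rewrite sum_nat_const cards_draws cardh.
apply: leq_sum => h hH; rewrite exchange_big /=.
apply: leq_sum => p hp; rewrite exchange_big /=.
have cp : #|p| = 2 by move: hp; rewrite inE => /andP[_ /eqP].
apply: leq_trans (_ : \sum_(h' in H) \sum_(p' in Q h')
   (((h' == h) && (p' == p)) * 'C(n - 2, r - 2)
     + (p :&: p' != set0) * 'C(n - 3, r - 3) + (4 <= r) * 'C(n - 4, r - 4)) <= _).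
  apply: leq_sum => h' hH'; rewrite exchange_big /=.
  apply: leq_sum => p' hp'.
  rewrite sum_bool_card; exact: (term_bound hlin h3 hH hH' hp hp').
under eq_bigr => h' _ do rewrite big_split /= big_split /=.
rewrite big_split /= big_split /= leq_add //; last first.
  rewrite (eq_bigr (fun _ => 'C(r, 2) * ((4 <= r) * 'C(n - 4, r - 4)))); last first.
    by move=> h' hH'; rewrite sum_nat_const cards_draws cardh.
  by rewrite sum_nat_const hM mulnA.
rewrite leq_add //.
  rewrite (bigD1 h) //= [X in _ + X <= _]big1 ?addn0; last first.
    move=> h' /andP[_ nh]; apply: big1 => p' _; by rewrite (negbTE nh).
  rewrite (bigD1 p) //= [X in _ + X <= _]big1 ?addn0; last first.
    by move=> p' /andP[_ np]; rewrite (negbTE np) andbF.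
  by rewrite !eqxx /= mul1n.
rewrite -hM -mulnA -sum_nat_const; apply: leq_sum => h' hH'.
rewrite -big_distrl /= leq_mul2r; apply/orP; right.
rewrite sum_bool_card; exact: meet_count cp (cardh h' hH').
Qed.

Lemma main_nat (H : {set {set T}}) r M (e : {set T}) :
  in_L r M H -> 3 <= r ->
  'C(n, r) <= #|Nr r e H| + M * 'C(r, 2) * 'C(n - 2, r - 2) + 1 /\
  #|Nr r e H| + M * 'C(r, 2) * 'C(n - 2, r - 2) <=
    'C(n, r) + M * 'C(r, 2) * (M * (2 * r) * 'C(n - 3, r - 3)
                  + M * 'C(r, 2) * ((4 <= r) * 'C(n - 4, r - 4))).
Proof.
case/and3P=> hr hlin /eqP hM h3.
set K1 := M * 'C(r, 2) * 'C(n - 2, r - 2).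
set D := M * 'C(r, 2) * _.
set S := [set f : {set T} | #|f| == r].
set B := [set f : {set T} | 0 < kf H f].
have hN : #|S :&: B| + #|S :\: B| = 'C(n, r) by rewrite cardsID card_draws card_ord.
have hNr : Nr r e H = (S :\: B) :\ e.
  apply/setP => f; rewrite !inE good_kf -eqn0Ngt.
  by case: (#|f| == r); case: (f != e); case: (kf H f == 0).
have hX1 : #|Nr r e H| <= #|S :\: B| by rewrite hNr subset_leq_card // subsetDl.
have hX2 : #|S :\: B| <= #|Nr r e H| + 1.
  by rewrite hNr (cardsD1 e (S :\: B)) addnC leq_add2l; case: (e \in _).
have hB : #|S :&: B| = \sum_(f : {set T} | #|f| == r) (0 < kf H f : nat).
  rewrite sum_bool_card; apply: eq_card => f; by rewrite !inE.
have hK : \sum_(f : {set T} | #|f| == r) kf H f = K1 by rewrite (sum_k hr hM) // ltnW.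
have hB1 : #|S :&: B| <= K1.
  rewrite hB -hK; apply: leq_sum => f _; by case: (kf H f).
have hsq := sum_k2 hr hlin hM h3.
have h2 : 2 * K1 <= #|S :&: B| + (K1 + D).
  apply: (@leq_trans (#|S :&: B| + \sum_(f : {set T} | #|f| == r) kf H f * kf H f)); last first.
    by rewrite leq_add2l /K1 /D -mulnDr addnA.
  rewrite hB -big_split /= -hK big_distrr /=; apply: leq_sum => f _.
  case: (kf H f) => [|[|k]] //=.
  by rewrite !mulSn !mul0n; lia.
split.
  rewrite -hN; have := hX2; lia.
have := hX1; rewrite -hN; lia.
Qed.
End G.

Lemma binstep a k : 0 < k -> 'C(a, k) * k = a * 'C(a - 1, k - 1).
Proof.
move=> hk; have := mul_bin_diag a (k - 1).
rewrite !subn1 prednK // => ->; by rewrite mulnC.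
Qed.


Lemma B1 n r : 2 <= r -> 'C(n, r) * (r * (r - 1)) = n * (n - 1) * 'C(n - 2, r - 2).
Proof.
move=> hr; rewrite mulnA binstep ?(leq_trans _ hr) // -mulnA binstep; last by lia.
have -> : n - 1 - 1 = n - 2 by lia.
have -> : r - 1 - 1 = r - 2 by lia.
by rewrite mulnA.
Qed.

Lemma B2 n r : 3 <= r -> 'C(n, r) * (r * (r - 1) * (r - 2)) = n * (n - 1) * (n - 2) * 'C(n - 3, r - 3).
Proof.
move=> hr; rewrite mulnA B1 ?(leq_trans _ hr) // -mulnA binstep; last by lia.
have -> : n - 2 - 1 = n - 3 by lia.
have -> : r - 2 - 1 = r - 3 by lia.
by rewrite mulnA.
Qed.

Lemma B3 n r : 3 <= r -> 'C(n, r) * (r * (r - 1) * (r - 2) * (r - 3)) =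
   n * (n - 1) * (n - 2) * (n - 3) * ((4 <= r) * 'C(n - 4, r - 4)).
Proof.
move=> hr; case: (leqP 4 r) => h4.
  rewrite mul1n mulnA B2 // -mulnA binstep; last by lia.
  have -> : n - 3 - 1 = n - 4 by lia.
  have -> : r - 3 - 1 = r - 4 by lia.
  by rewrite mulnA.
have -> : r - 3 = 0 by lia.
by rewrite !muln0.
Qed.

Lemma c2E r : 'C(r, 2) * 2 = r * (r - 1).
Proof. by rewrite binstep // bin1. Qed.

Lemma n4_le (n : nat) : 6 <= n -> n ^ 4 <= 16 * (n * (n - 1) * (n - 2) * (n - 3)).
Proof. move=> h.
have h1 : n <= 2 * (n - 1) by lia.
have h2 : n <= 2 * (n - 2) by lia.
have h3 : n <= 2 * (n - 3) by lia.
apply: (@leq_trans (n * (2 * (n - 1)) * (2 * (n - 2)) * (2 * (n - 3)))).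
  have -> : n ^ 4 = n * n * n * n by ring.
  by repeat apply: leq_mul.
have -> : n * (2 * (n - 1)) * (2 * (n - 2)) * (2 * (n - 3)) = 8 * (n * (n - 1) * (n - 2) * (n - 3)) by ring.
by rewrite leq_mul2r; apply/orP; right.
Qed.

Lemma n3_le (n : nat) : 6 <= n -> n ^ 3 <= 8 * (n * (n - 1) * (n - 2)).
Proof. move=> h.
have h1 : n <= 2 * (n - 1) by lia.
have h2 : n <= 2 * (n - 2) by lia.
apply: (@leq_trans (n * (2 * (n - 1)) * (2 * (n - 2)))).
  have -> : n ^ 3 = n * n * n by ring.
  by repeat apply: leq_mul.
have -> : n * (2 * (n - 1)) * (2 * (n - 2)) = 4 * (n * (n - 1) * (n - 2)) by ring.
by rewrite leq_mul2r; apply/orP; right.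
Qed.

Lemma n2_le (n : nat) : 2 <= n -> n ^ 2 <= 2 * (n * (n - 1)).
Proof. move=> h; have h1 : n <= 2 * (n - 1) by lia.
have -> : n ^ 2 = n * n by ring.
rewrite mulnCA leq_mul2l h1 orbT //.
Qed.

Section Asym.
Variables (n r m : nat).
Hypotheses (hr : 3 <= r) (hm : 1 <= m) (hn : 6 <= n) (ho : 4 * (m ^ 2 * r ^ 6) <= n ^ 3).

Lemma rr_le : r * r <= n.
Proof.
rewrite leqNgt; apply/negP => hlt.
have : n ^ 3 < (r * r) ^ 3 by rewrite ltn_exp2r.
have -> : (r * r) ^ 3 = r ^ 6 by ring.
move=> h.
have h1 : r ^ 6 <= 4 * (m ^ 2 * r ^ 6).
  rewrite mulnA -[X in X <= _]mul1n leq_mul2r; apply/orP; right.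
  by rewrite muln_gt0 expn_gt0 hm.
by have := leq_trans (leq_trans h h1) ho; rewrite ltnn.
Qed.

Lemma mr4_le : 2 * m * r ^ 4 <= n ^ 2.
Proof.
rewrite -(@leq_exp2r _ _ 2) //.
have -> : (2 * m * r ^ 4) ^ 2 = 4 * (m ^ 2 * r ^ 6) * (r * r) by ring.
have -> : (n ^ 2) ^ 2 = n ^ 3 * n by ring.
by apply: leq_mul => //; exact: rr_le.
Qed.


Lemma R2_le : r * (r - 1) <= r * r.
Proof. by rewrite leq_mul2l leq_subr orbT. Qed.

Lemma nP2 : n ^ 2 <= 2 * (n * (n - 1)).
Proof. apply: n2_le; exact: leq_trans hn. Qed.

Lemma b2P2 : 'C(n - 2, r - 2) * (n * (n - 1)) = 'C(n, r) * (r * (r - 1)).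
Proof. by rewrite mulnC B1 // ltnW. Qed.

Lemma half_A : 2 * m * ('C(r, 2) * 'C(n - 2, r - 2)) <= 'C(n, r).
Proof.
have hP : 0 < n * (n - 1) by rewrite muln_gt0 subn_gt0; apply/andP; split; apply: leq_trans hn.
rewrite -(leq_pmul2r hP).
have -> : 2 * m * ('C(r, 2) * 'C(n - 2, r - 2)) * (n * (n - 1))
   = m * ('C(r, 2) * 2) * ('C(n - 2, r - 2) * (n * (n - 1))) by ring.
rewrite c2E b2P2.
have -> : m * (r * (r - 1)) * ('C(n, r) * (r * (r - 1)))
   = 'C(n, r) * (m * (r * (r - 1)) * (r * (r - 1))) by ring.
rewrite leq_mul2l; apply/orP; right.
apply: (@leq_trans (m * (r * r) * (r * r))).
  by apply: leq_mul; [apply: leq_mul|]; rewrite ?R2_le.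
rewrite -(leq_pmul2l (isT : 0 < 2)).
apply: leq_trans nP2.
by apply: leq_trans mr4_le; rewrite leq_eqVlt; apply/orP; left; apply/eqP; ring.
Qed.

Lemma cb_bound : 'C(r, 2) * 'C(n - 2, r - 2) * n ^ 2 <= 'C(n, r) * r ^ 4.
Proof.
apply: (@leq_trans ('C(r, 2) * 'C(n - 2, r - 2) * (2 * (n * (n - 1))))).
  by rewrite leq_mul2l nP2 orbT.
have -> : 'C(r, 2) * 'C(n - 2, r - 2) * (2 * (n * (n - 1)))
   = ('C(r, 2) * 2) * ('C(n - 2, r - 2) * (n * (n - 1))) by ring.
rewrite c2E b2P2.
have -> : r ^ 4 = (r * r) * (r * r) by ring.
rewrite mulnCA leq_mul2l; apply/orP; right.
by apply: leq_mul; rewrite R2_le.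
Qed.

Lemma cb_pos : 0 < 'C(r, 2) * 'C(n - 2, r - 2).
Proof.
have h := rr_le; rewrite muln_gt0 !bin_gt0; apply/andP; split.
  exact: leq_trans hr.
apply: leq_sub2r; apply: leq_trans h; rewrite -[X in X <= _]muln1 leq_mul2l; apply/orP; right; exact: leq_trans hr.
Qed.

Lemma T1_bound : m.-1 * 'C(r, 2) * (m.-1 * (2 * r) * 'C(n - 3, r - 3)) * n ^ 3
   <= 8 * 'C(n, r) * (m ^ 2 * r ^ 6).
Proof.
have -> : m.-1 * 'C(r, 2) * (m.-1 * (2 * r) * 'C(n - 3, r - 3)) * n ^ 3
   = (m.-1 * m.-1 * r * ('C(r, 2) * 2)) * ('C(n - 3, r - 3) * n ^ 3) by ring.
have h1 : 'C(n - 3, r - 3) * n ^ 3 <= 8 * ('C(n, r) * r ^ 3).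
  apply: (@leq_trans ('C(n - 3, r - 3) * (8 * (n * (n - 1) * (n - 2))))).
    rewrite leq_mul2l; apply/orP; right; exact: n3_le.
  rewrite mulnCA leq_mul2l; apply/orP; right; rewrite mulnC -B2 // leq_mul2l; apply/orP; right.
  have -> : r ^ 3 = r * r * r by ring.
  by apply: leq_mul; [apply: leq_mul|]; rewrite ?leq_subr.
rewrite c2E.
apply: (@leq_trans ((m * m * r * (r * r)) * (8 * ('C(n, r) * r ^ 3)))).
  apply: leq_mul => //; apply: leq_mul; last exact: R2_le.
  by apply: leq_mul => //; apply: leq_mul; rewrite leq_pred.
by rewrite leq_eqVlt; apply/orP; left; apply/eqP; ring.
Qed.

Lemma T2_bound : m.-1 * 'C(r, 2) * (m.-1 * 'C(r, 2) * ((4 <= r) * 'C(n - 4, r - 4))) * n ^ 3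
   <= 4 * 'C(n, r) * (m ^ 2 * r ^ 6).
Proof.
set b4 := (4 <= r) * 'C(n - 4, r - 4).
have hn0 : 0 < 4 * n by rewrite muln_gt0 (leq_trans _ hn).
rewrite -(leq_pmul2l hn0).
have -> : 4 * n * (m.-1 * 'C(r, 2) * (m.-1 * 'C(r, 2) * b4) * n ^ 3)
   = (m.-1 * m.-1 * ('C(r, 2) * 2) * ('C(r, 2) * 2)) * (b4 * n ^ 4) by ring.
have h1 : b4 * n ^ 4 <= 16 * ('C(n, r) * r ^ 4).
  apply: (@leq_trans (b4 * (16 * (n * (n - 1) * (n - 2) * (n - 3))))).
    rewrite leq_mul2l; apply/orP; right; exact: n4_le.
  rewrite mulnCA leq_mul2l; apply/orP; right; rewrite mulnC /b4 -B3 // leq_mul2l; apply/orP; right.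
  have -> : r ^ 4 = r * r * r * r by ring.
  by apply: leq_mul; [apply: leq_mul; [apply: leq_mul|]|]; rewrite ?leq_subr.
rewrite c2E.
apply: (@leq_trans ((m * m * (r * r) * (r * r)) * (16 * ('C(n, r) * r ^ 4)))).
  apply: leq_mul => //; apply: leq_mul; last exact: R2_le.
  apply: leq_mul; last exact: R2_le.
  by apply: leq_mul; rewrite leq_pred.
have hrr := rr_le.
have -> : m * m * (r * r) * (r * r) * (16 * ('C(n, r) * r ^ 4))
   = 4 * (4 * 'C(n, r) * (m ^ 2 * r ^ 6)) * (r * r) by ring.
have -> : 4 * n * (4 * 'C(n, r) * (m ^ 2 * r ^ 6)) = 4 * (4 * 'C(n, r) * (m ^ 2 * r ^ 6)) * n by ring.
by rewrite leq_mul2l hrr orbT.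
Qed.

Lemma D_bound : m.-1 * 'C(r, 2) * (m.-1 * (2 * r) * 'C(n - 3, r - 3)
                  + m.-1 * 'C(r, 2) * ((4 <= r) * 'C(n - 4, r - 4))) * n ^ 3
   <= 12 * 'C(n, r) * (m ^ 2 * r ^ 6).
Proof.
rewrite mulnDr mulnDl.
have -> : 12 * 'C(n, r) * (m ^ 2 * r ^ 6) = 8 * 'C(n, r) * (m ^ 2 * r ^ 6) + 4 * 'C(n, r) * (m ^ 2 * r ^ 6) by ring.
by apply: leq_add; [exact: T1_bound | exact: T2_bound].
Qed.
End Asym.

Local Open Scope ring_scope.

Lemma final_rat (X N cb D M u v Aq : rat) :
 Aq = N - (M + 1) * cb -> N <= X + M * cb + 1 -> X + M * cb <= N + D ->
 2 * (M + 1) * cb <= N -> cb <= N * u -> D <= 12 * N * v -> 1 <= cb -> 0 <= D ->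
 0 <= u -> 0 <= v -> 0 <= M ->
 `|X - Aq| <= 24 * `|Aq| * (u + v).
Proof.
move=> eA h1 h2 h3 h4 h5 h6 h7 hu hv hM.
have hA : N / 2 <= Aq by rewrite eA; lra.
have hN0 : 0 <= N by nra.
have hA0 : 0 <= Aq by lra.
rewrite (ger0_norm hA0) ger0_norm; last by rewrite eA; lra.
have hN : 12 * N * (u + v) <= 24 * Aq * (u + v) by nra.
nra.
Qed.

Theorem lemma10p1 (r m : nat -> nat) (e : forall n : nat, {set 'I_n})
  (hr : forall n, (3 <= r n)%N)
  (hm : forall n, (1 <= m n)%N)
  (he : exists n1 : nat, forall n, (n1 <= n)%N -> #|e n| = r n)
  (ho : forall eps : rat, 0 < eps -> exists n0 : nat, forall n, (n0 <= n)%N ->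
          ((m n)%:R ^+ 2 * (r n)%:R ^+ 6 : rat) <= eps * (n%:R ^+ 3)) :
  exists C : rat, exists n0 : nat, forall n, (n0 <= n)%N ->
    forall H : {set {set 'I_n}}, in_L (r n) (m n).-1 H ->
      let A : rat := ('C(n, r n))%:R
                     - ('C(r n, 2))%:R * (m n)%:R * ('C(n - 2, r n - 2))%:R in
      `| (#|Nr (r n) (e n) H|)%:R - A |
        <= C * `|A| * ((r n)%:R ^+ 4 / n%:R ^+ 2
                       + (r n)%:R ^+ 6 * (m n)%:R ^+ 2 / n%:R ^+ 3).
Proof.
have [n0 hn0] := ho (1 / 4) isT.
exists 24, (maxn n0 6) => n hn H hL; cbv zeta.
have hn6 : (6 <= n)%N by apply: leq_trans hn; rewrite leq_maxr.
have hrn := hr n; have hmn := hm n.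
have hnat : (4 * ((m n) ^ 2 * (r n) ^ 6) <= n ^ 3)%N.
  have h := hn0 n (leq_trans (leq_maxl _ _) hn).
  rewrite -(ler_nat rat).
  rewrite natrM natrM !natrX.
  have -> : (4 : nat)%:R = 4 :> rat by [].
  lra.
have [f1 f2] := main_nat (e n) hL hrn.
have f3 := half_A hrn hmn hn6 hnat.
have f4 := cb_bound hrn hn6.
have f5 := D_bound hrn hmn hn6 hnat.
have f6 := cb_pos hrn hmn hnat.
set X := #|Nr (r n) (e n) H| in f1 f2 *.
set N := 'C(n, r n) in f1 f2 f3 f4 f5 *.
set c2 := 'C(r n, 2) in f1 f2 f3 f4 f5 f6 *.
set b2 := 'C(n - 2, r n - 2) in f1 f2 f3 f4 f6 *.
set D := ((m n).-1 * c2 * ((m n).-1 * (2 * r n) * 'C(n - 3, r n - 3) + (m n).-1 * c2 * ((4 <= r n) * 'C(n - 4, r n - 4))))%N in f2 f5.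
have hmM : m n = ((m n).-1 + 1)%N by rewrite addn1 prednK.
have hn0' : (0 : rat) < n%:R by rewrite ltr0n (leq_trans _ hn6).
have hmR : (m n)%:R = (m n).-1%:R + 1 :> rat by rewrite natr1 prednK.
apply: (@final_rat X%:R N%:R (c2 * b2)%:R D%:R (m n).-1%:R
          ((r n)%:R ^+ 4 / n%:R ^+ 2) ((r n)%:R ^+ 6 * (m n)%:R ^+ 2 / n%:R ^+ 3)).
- rewrite hmR natrM; ring.
- by move: f1; rewrite -(ler_nat rat) !natrD !natrM mulrA.
- by move: f2; rewrite -(ler_nat rat) !natrD !natrM mulrA.
- move: f3; rewrite -(ler_nat rat) !natrM hmR => h.
  nra.
- rewrite mulrA ler_pdivlMr ?exprn_gt0 //.
  by rewrite -!natrX -!natrM ler_nat.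
- rewrite (_ : 12 * N%:R * ((r n)%:R ^+ 6 * (m n)%:R ^+ 2 / n%:R ^+ 3)
     = (12 * N * ((m n) ^ 2 * (r n) ^ 6))%:R / n%:R ^+ 3); last first.
    by rewrite natrM natrM natrM natrX natrX; ring.
  by rewrite ler_pdivlMr ?exprn_gt0 // -natrX -natrM ler_nat.
- by rewrite ler1n muln_gt0 -muln_gt0.
- by [].
- by rewrite divr_ge0 // exprn_ge0.
- by rewrite divr_ge0 // ?mulr_ge0 // exprn_ge0.
- by [].
Qed.
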